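(* Let $T$ be an open cone in $V$ with basepoint $b\in T$. For each $x\in\partial T\setminus[0]_T$, the set $A_T(x)$ is closed in the topology of pointwise convergence of functions on $T$ (relative to the set of Funk horofunctions of $T$): if $g_n\in A_T(x)$ converge pointwise to a Funk horofunction $g$, then $g\in A_T(x)$.
   Context: $V$ is a finite-dimensional real vector space. An open cone is a nonempty open convex set $T\subset V$ with $\lambda T\subseteq T$ for all $\lambda>0$ and $0\notin T$; $\partial T$ its boundary. Write $x\le_T y$ iff $y-x\in\overline T$, $[0]_T:=\overline T\cap(-\overline T)$. $M_T(y/x):=\inf\{\lambda>0:y\le_T\lambda x\}$, $F_T(y,x):=\log M_T(y/x)$. A sequence $(x_n)$ in $T$ converges in the Funk sense to $g$ if $F_T(\cdot,x_n)-F_T(b,x_n)\to g$ pointwise on $T$; a Funk horofunction is such a limit not of the form $F_T(\cdot,p)-F_T(b,p)$, $p\in T$. $A_T(x)$ is the set of Funk horofunctions that are Funk-sense limits of sequences in $T$ converging to $x$ in the usual topology of $V$. *)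

(* Defs.v *)
From HB Require Import structures.
From mathcomp Require Import all_boot all_order all_algebra.
From mathcomp Require Import all_classical all_reals.
From mathcomp Require Import topology normedtype sequences exp.
Set Implicit Arguments. Unset Strict Implicit. Unset Printing Implicit Defensive.
Import Order.TTheory GRing.Theory Num.Theory.
Import numFieldNormedType.Exports.
Local Open Scope classical_set_scope.
Local Open Scope ring_scope.

Section FunkDefs.
Variables (R : realType) (n : nat).
Notation V := 'rV[R]_n.

Definition convex_set (T : set V) : Prop :=
  forall x y t, T x -> T y -> 0 <= t <= 1 -> T (t *: x + (1 - t) *: y).

Definition open_cone (T : set V) : Prop :=
  [/\ T !=set0, open T, convex_set T,
      (forall l x, 0 < l -> T x -> T (l *: x)) & ~ T 0].

Definition cone_boundary (T : set V) : set V := closure T `\` interior T.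

Definition cone_le (T : set V) (x y : V) : Prop := closure T (y - x).

Definition cone_zero (T : set V) : set V :=
  closure T `&` [set v | closure T (- v)].

Definition funkM (T : set V) (y x : V) : R :=
  inf [set l : R | 0 < l /\ cone_le T y (l *: x)].

Definition funkF (T : set V) (y x : V) : R := ln (funkM T y x).

Definition funk_conv (T : set V) (b : V) (xs : nat -> V) (g : V -> R) : Prop :=
  (forall k, T (xs k)) /\
  forall y, T y -> (fun k => funkF T y (xs k) - funkF T b (xs k)) @ \oo --> g y.

Definition funk_horofunction (T : set V) (b : V) (g : V -> R) : Prop :=
  (exists xs, funk_conv T b xs g) /\
  ~ (exists p, T p /\ forall y, T y -> g y = funkF T y p - funkF T b p).

Definition funk_A (T : set V) (b : V) (x : V) : set (V -> R) :=
  [set g | funk_horofunction T b g /\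
           exists xs, funk_conv T b xs g /\ xs @ \oo --> x].

End FunkDefs.

(* Main.v *)
Require Import Defs.
From HB Require Import structures.
From mathcomp Require Import all_boot all_order all_algebra.
From mathcomp Require Import all_classical all_reals.
From mathcomp Require Import topology normedtype sequences exp.
Import Order.TTheory GRing.Theory Num.Theory.
Import numFieldNormedType.Exports.
Local Open Scope classical_set_scope.
Local Open Scope ring_scope.
From mathcomp Require Import ring lra.
Set Implicit Arguments. Unset Strict Implicit.
Lemma oc_ball (R : realType) (n : nat) (T : set 'rV[R]_n) y :
  open_cone T -> T y -> exists2 e : R, 0 < e & forall v, `|v| < e -> T (y + v).
Proof.
case=> _ oT _ _ _ Ty.
have : open_nbhs y T by split.
rewrite open_nbhsE => -[_] /nbhs_ballP[e /= e0 sub]; exists e => // v hv.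
apply: sub; rewrite -ball_normE /= opprD addrA subrr add0r normrN //.
Qed.

Lemma oc_add (R : realType) (n : nat) (T : set 'rV[R]_n) a b :
  open_cone T -> T a -> T b -> T (a + b).
Proof.
case=> _ _ cT sT _ Ta Tb.
have h := cT a b (2^-1) Ta Tb.
have : T (2 *: (2^-1 *: a + (1 - 2^-1) *: b)).
  apply: sT => //; apply: h; rewrite invr_ge0 ler0n /=.
  by rewrite invf_le1 // ler1n.
have -> : (1 - 2^-1 : R) = 2^-1 by rewrite {1}(splitr 1) mul1r addrK.
by rewrite scalerDr !scalerA divff ?pnatr_eq0 // !scale1r.
Qed.

Lemma oc_scale (R : realType) (n : nat) (T : set 'rV[R]_n) l a :
  open_cone T -> 0 < l -> T a -> T (l *: a).
Proof. by case=> _ _ _ sT _; apply: sT. Qed.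

Definition Cl (R : realType) (n : nat) (T : set 'rV[R]_n) v :=
  forall t, T t -> T (v + t).

Lemma closure_Cl (R : realType) (n : nat) (T : set 'rV[R]_n) v :
  open_cone T -> closure T v -> Cl T v.
Proof.
move=> oc clv t Tt.
have [e e0 be] := oc_ball oc Tt.
have nb : nbhs v (ball v e) by apply: nbhsx_ballx.
have [w [Tw]] := clv _ nb.
rewrite -ball_normE /= => hw.
have -> : v + t = w + (t + (v - w)) by rewrite addrCA (addrC w) subrK addrC.
apply: oc_add => //; apply: be; done.
Qed.

Lemma Cl_closure (R : realType) (n : nat) (T : set 'rV[R]_n) v :
  open_cone T -> Cl T v -> closure T v.
Proof.
move=> oc hv B /nbhs_ballP[e /= e0 sub].
have [[t0 Tt0] _ _ _ _] := oc.
pose d := e / (2 * (`|t0| + 1)).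
have d0 : 0 < d by rewrite divr_gt0 // mulr_gt0 // ltr_pwDr.
exists (v + d *: t0); split; first by apply: hv; apply: oc_scale.
apply: sub; rewrite -ball_normE /= opprD addrA subrr add0r normrN normrZ.
rewrite gtr0_norm //.
have t1 : 0 < `|t0| + 1 by rewrite ltr_pwDr.
have -> : d * `|t0| = e / 2 * (`|t0| / (`|t0| + 1)).
  by rewrite /d; field; rewrite gt_eqF.
have a1 : `|t0| / (`|t0| + 1) < 1 by rewrite ltr_pdivrMr // mul1r ltrDl.
have a0 : 0 <= `|t0| / (`|t0| + 1) by rewrite divr_ge0 // ltW.
move: a1 a0; set a := _ / _ => a1 a0; nra.
Qed.

Lemma small_mul (R : realType) (e a : R) : 0 < e -> 0 <= a -> e / (a + 1) * a < e.
Proof.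
move=> e0 a0; have a1 : 0 < a + 1 by rewrite ltr_pwDr.
have -> : e / (a + 1) * a = e * (a / (a + 1)) by rewrite mulrAC mulrA.
have b1 : a / (a + 1) < 1 by rewrite ltr_pdivrMr // mul1r ltrDl.
have b0 : 0 <= a / (a + 1) by rewrite divr_ge0 // ltW.
move: b1 b0; set b := _ / _ => b1 b0; nra.
Qed.

Section FM.
Variables (R : realType) (n : nat) (T : set 'rV[R]_n).

Lemma T_Cl v : open_cone T -> T v -> Cl T v.
Proof. by move=> oc Tv t Tt; apply: oc_add. Qed.

Lemma Cl_add u v : open_cone T -> Cl T u -> Cl T v -> Cl T (u + v).
Proof. by move=> oc hu hv t Tt; rewrite -addrA; apply: hu; apply: hv. Qed.

Lemma Cl_scale l u : open_cone T -> 0 < l -> Cl T u -> Cl T (l *: u).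
Proof.
move=> oc l0 hu t Tt.
have -> : l *: u + t = l *: (u + l^-1 *: t).
  by rewrite scalerDr scalerA divff ?gt_eqF // scale1r.
apply: oc_scale => //; apply: hu; by apply: oc_scale => //; rewrite invr_gt0.
Qed.

Lemma funkM_E y z : open_cone T ->
  funkM T y z = inf [set l | 0 < l /\ Cl T (l *: z - y)].
Proof.
move=> oc; rewrite /funkM /cone_le; congr inf; apply/funext => l.
apply/propext; split => -[l0 c]; split => //.
  exact: closure_Cl.
exact: Cl_closure.
Qed.

Lemma S_ne y z : open_cone T -> T y -> T z ->
  exists l, 0 < l /\ Cl T (l *: z - y).
Proof.
move=> oc Ty Tz; have [e e0 be] := oc_ball oc Tz.
pose d := e / (`|y| + 1).
have d0 : 0 < d by rewrite divr_gt0 // ltr_pwDr.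
have Tu : T (z + - (d *: y)).
  by apply: be; rewrite normrN normrZ gtr0_norm // small_mul.
exists d^-1; split; first by rewrite invr_gt0.
have -> : d^-1 *: z - y = d^-1 *: (z + - (d *: y)).
  by rewrite scalerDr scalerN scalerA mulVf ?gt_eqF // scale1r.
apply: T_Cl => //; by apply: oc_scale => //; rewrite invr_gt0.
Qed.

Lemma S_lb y z : open_cone T -> T y -> T z ->
  exists2 d, 0 < d & forall l, 0 < l /\ Cl T (l *: z - y) -> d < l.
Proof.
move=> oc Ty Tz; have [e e0 be] := oc_ball oc Ty.
pose d := e / (`|z| + 1).
have d0 : 0 < d by rewrite divr_gt0 // ltr_pwDr.
exists d => // l [l0 c]; rewrite ltNge; apply/negP => ld.
have Tu : T (y + - (l *: z)).
  apply: be; rewrite normrN normrZ gtr0_norm //.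
  apply: (le_lt_trans _ (small_mul e0 (normr_ge0 z))).
  by rewrite ler_wpM2r.
have := c _ Tu.
rewrite addrA subrK subrr.
by case: oc.
Qed.

Lemma M_pos y z : open_cone T -> T y -> T z -> 0 < funkM T y z.
Proof.
move=> oc Ty Tz; rewrite funkM_E //.
have [d d0 hd] := S_lb oc Ty Tz.
apply: (lt_le_trans d0); apply: lb_le_inf; first by have [l hl] := S_ne oc Ty Tz; exists l.
by move=> l /hd /ltW.
Qed.

Lemma M_le y z l : open_cone T -> 0 < l -> Cl T (l *: z - y) -> funkM T y z <= l.
Proof.
move=> oc l0 c; rewrite funkM_E //; apply: ge_inf; last by split.
by exists 0 => m [m0 _]; apply: ltW.
Qed.

Lemma M_mul y y' z : open_cone T -> T y -> T y' -> T z ->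
  funkM T y z <= funkM T y y' * funkM T y' z.
Proof.
move=> oc Ty Ty' Tz.
have M1 := M_pos oc Ty Ty'.
have key : forall a c, 0 < a /\ Cl T (a *: y' - y) -> 0 < c /\ Cl T (c *: z - y') ->
    funkM T y z <= a * c.
  move=> a c [a0 ca] [c0 cc]; apply: M_le => //; first exact: mulr_gt0.
  have -> : (a * c) *: z - y = a *: (c *: z - y') + (a *: y' - y).
    by rewrite scalerBr scalerA addrA subrK.
  by apply: Cl_add => //; apply: Cl_scale.
have h2 : forall c, 0 < c /\ Cl T (c *: z - y') -> funkM T y z / c <= funkM T y y'.
  move=> c hc; rewrite [X in _ <= X]funkM_E //; apply: lb_le_inf.
    by have [l hl] := S_ne oc Ty Ty'; exists l.
  move=> a ha; rewrite ler_pdivrMr; last by case: hc.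
  exact: (key a c ha hc).
have : funkM T y z / funkM T y y' <= funkM T y' z.
  rewrite [X in _ <= X]funkM_E //; apply: lb_le_inf.
    by have [l hl] := S_ne oc Ty' Tz; exists l.
  move=> c hc; have := h2 c hc.
  have c0 : 0 < c by case: hc.
  rewrite (ler_pdivrMr _ _ c0) => h.
  rewrite (ler_pdivrMr _ _ M1) (mulrC c); exact: h.
rewrite (ler_pdivrMr _ _ M1) => h; rewrite mulrC; exact: h.
Qed.

Lemma F_tri y y' z : open_cone T -> T y -> T y' -> T z ->
  funkF T y z <= funkF T y y' + funkF T y' z.
Proof.
move=> oc Ty Ty' Tz; rewrite /funkF -lnM ?posrE ?M_pos //.
by rewrite ler_ln ?posrE ?mulr_gt0 ?M_pos // M_mul.
Qed.

Lemma F_le y z l : open_cone T -> T y -> T z -> 0 < l -> Cl T (l *: z - y) ->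
  funkF T y z <= ln l.
Proof.
move=> oc Ty Tz l0 c; rewrite /funkF ler_ln ?posrE ?M_pos //.
exact: M_le.
Qed.

End FM.
Lemma norm_lt (R : realType) n (v : 'rV[R]_n) e :
  0 < e -> (forall j, `|v ord0 j| < e) -> `|v| < e.
Proof.
move=> e0 h; change (mx_norm v < e); rewrite mx_normrE.
apply/bigmax_ltP; split => // -[i j] _ /=.
by rewrite (ord1 i).
Qed.

Definition qseq (R : realType) (n : nat) (j : nat) : 'rV[R]_n :=
  match unpickle (s := ('rV[int]_n * nat)%type) j with
  | Some (w, N) => (N.+1%:R)^-1 *: map_mx (fun z : int => z%:~R) w
  | None => 0
  end.

Lemma qseq_dense (R : realType) n (y : 'rV[R]_n) e :
  0 < e -> exists j, `|qseq R n j - y| < e.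
Proof.
move=> e0; pose N := Num.trunc (e^-1).
have hN : e^-1 < N.+1%:R by apply: truncnS_gt.
have M0 : 0 < (N.+1%:R : R) by rewrite ltr0n.
pose w : 'rV[int]_n := \row_k Num.floor (y ord0 k * N.+1%:R).
exists (pickle (w, N)); rewrite /qseq pickleK.
apply: norm_lt => // k; rewrite !mxE.
set a := y ord0 k * N.+1%:R.
have h1 := floor_le_tmp a.
have h2 := lt_succ_floor a.
rewrite intrD in h2.
have -> : N.+1%:R^-1 * (Num.floor a)%:~R - y ord0 k =
   - (N.+1%:R^-1 * (a - (Num.floor a)%:~R)).
  by rewrite /a; field; rewrite addrC natr1 pnatr_eq0.
rewrite normrN ger0_norm; last by apply: mulr_ge0; [rewrite invr_ge0 ltW | rewrite subr_ge0].
have e1 : N.+1%:R^-1 < e.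
  by rewrite -(invrK e) ltf_pV2 ?posrE ?invr_gt0.
apply: le_lt_trans e1.
rewrite -[leRHS]mulr1 ler_wpM2l ?invr_ge0 ?ltW //.
move: h2; rewrite (_ : 1%:~R = 1) //; lra.
Qed.

Lemma near_F (R : realType) (n : nat) (T : set 'rV[R]_n) y eps :
  open_cone T -> T y -> 0 < eps ->
  exists2 r, 0 < r & forall q, `|q - y| < r ->
    [/\ T q, funkF T y q <= eps & funkF T q y <= eps].
Proof.
move=> oc Ty e0; have [e ee0 be] := oc_ball oc Ty.
have l0 : 0 < 1 + eps by rewrite addr_gt0.
exists (eps * e / (1 + eps)); first by rewrite !mulr_gt0 ?invr_gt0.
move=> q hq.
have hq1 : (1 + eps) / eps * `|q - y| < e.
  have dp : 0 < (1 + eps) / eps by rewrite divr_gt0.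
  rewrite mulrC -(ltr_pdivlMr _ _ dp).
  have -> : e / ((1 + eps) / eps) = eps * e / (1 + eps).
    by field; rewrite !gt_eqF.
  exact: hq.
have Tq : T q.
  have -> : q = y + (q - y) by rewrite addrC subrK.
  apply: be; apply: le_lt_trans hq1.
  rewrite -[leLHS]mul1r ler_wpM2r // ler_pdivlMr // mul1r; lra.
have lnb : ln (1 + eps) <= eps by apply: le_ln1Dx; lra.
split => //.
- apply: le_trans lnb; apply: F_le => //.
  have -> : (1 + eps) *: q - y = eps *: (y + ((1 + eps) / eps) *: (q - y)).
    by apply/rowP => j; rewrite !mxE; field; rewrite gt_eqF.
  apply: Cl_scale => //; apply: T_Cl => //; apply: be.
  by rewrite normrZ gtr0_norm ?divr_gt0.
- apply: le_trans lnb; apply: F_le => //.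
  have -> : (1 + eps) *: y - q = eps *: (y + eps^-1 *: (y - q)).
    by apply/rowP => j; rewrite !mxE; field; rewrite gt_eqF.
  apply: Cl_scale => //; apply: T_Cl => //; apply: be.
  rewrite normrZ gtr0_norm ?invr_gt0 // -normrN opprB.
  apply: le_lt_trans hq1; rewrite ler_wpM2r // ler_pdivlMr // mulrC.
  rewrite divff ?gt_eqF //; lra.
Qed.

Lemma conv_lip (R : realType) (n : nat) (T : set 'rV[R]_n) b xs h y y' :
  open_cone T -> funk_conv T b xs h -> T y -> T y' -> h y - h y' <= funkF T y y'.
Proof.
move=> oc [Txs hc] Ty Ty'.
have H : (fun k => (funkF T y (xs k) - funkF T b (xs k)) -
   (funkF T y' (xs k) - funkF T b (xs k))) @ \oo --> h y - h y'.
  by apply: cvgB; [exact: hc | exact: hc].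
rewrite -(cvg_lim _ H) //; apply: limr_le; first exact: (cvgP _ H).
apply: nearW => k /=.
have := F_tri oc Ty Ty' (Txs k).
by rewrite opprB addrA subrK lerBlDr.
Qed.

Lemma ev_inv (R : realType) (e : R) : 0 < e -> \forall k \near \oo, k.+1%:R^-1 < e.
Proof.
move=> e0; pose N := Num.truncn (e^-1).
have hN : e^-1 < N.+1%:R by apply: truncnS_gt.
apply: filterS (nbhs_infty_ge N) => k hk.
have e1 : N.+1%:R^-1 < e by rewrite -(invrK e) ltf_pV2 ?posrE ?invr_gt0 ?ltr0n.
apply: le_lt_trans e1; rewrite lef_pV2 ?posrE ?ltr0n // ler_nat ltnS; exact: hk.
Qed.

Lemma ev_fin (P : nat -> nat -> Prop) K :
  (forall j, \forall m \near \oo, P j m) ->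
  \forall m \near \oo, forall j, (j <= K)%N -> P j m.
Proof.
move=> h; elim: K => [|K IH].
  by apply: filterS (h 0%N) => m hm j; rewrite leqn0 => /eqP->.
apply: filterS2 IH (h K.+1) => m h1 h2 j.
by rewrite leq_eqVlt ltnS => /orP[/eqP->|/h1].
Qed.

Lemma combine (R : realType) (gy gq gsq Fyz Fbz Fqz Fyq Fqy e ek : R) :
  gy - gq <= Fyq -> gq - gy <= Fqy -> Fyq <= e -> Fqy <= e ->
  Fyz <= Fyq + Fqz -> Fqz <= Fqy + Fyz ->
  `|gq - gsq| < e -> `|gsq - (Fqz - Fbz)| < ek -> ek < e ->
  `|gy - (Fyz - Fbz)| < 4 * e.
Proof.
move=> ? ? ? ? ? ? /ltr_normlP [? ?] /ltr_normlP [? ?] ?.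
rewrite ltr_norml; apply/andP; split; lra.
Qed.

Unset Implicit Arguments. Set Strict Implicit.

Theorem mainTheorem18 (R : realType) (n : nat) (T : set 'rV[R]_n)
  (b x : 'rV[R]_n) (gs : nat -> ('rV[R]_n -> R)) (g : 'rV[R]_n -> R) :
  open_cone T -> T b ->
  cone_boundary T x -> ~ cone_zero T x ->
  (forall k, funk_A T b x (gs k)) ->
  (forall y, T y -> (fun k => gs k y) @ \oo --> g y) ->
  funk_horofunction T b g ->
  funk_A T b x g.
Proof.
move=> oc Tb bx nzx hgs hg hhoro.
split => //.
have [X hX] := choice (fun k => (hgs k).2).
pose q := qseq R n.
pose ek (k : nat) : R := k.+1%:R^-1.
have ek0 : forall k, 0 < ek k by move=> k; rewrite invr_gt0 ltr0n.
pose phi (z : 'rV[R]_n) (y : 'rV[R]_n) := funkF T y z - funkF T b z.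
have hm : forall k, exists m, `|x - X k m| < ek k /\
   forall j, (j <= k)%N -> T (q j) -> `|gs k (q j) - phi (X k m) (q j)| < ek k.
  move=> k.
  have E1 : \forall m \near \oo, `|x - X k m| < ek k.
    by move: (hX k).2 => /cvgrPdist_lt; apply.
  have E2 : \forall m \near \oo, forall j, (j <= k)%N -> T (q j) ->
      `|gs k (q j) - phi (X k m) (q j)| < ek k.
    apply: ev_fin => j; have [Tq|nTq] := pselect (T (q j)).
      have := (hX k).1.2 _ Tq => /cvgrPdist_lt /(_ _ (ek0 k)).
      by apply: filterS => mm hmm _.
    by apply: nearW => m /nTq.
  have E : \forall m \near \oo, `|x - X k m| < ek k /\
     forall j, (j <= k)%N -> T (q j) -> `|gs k (q j) - phi (X k m) (q j)| < ek k.
    by apply: filterS2 E1 E2 => mm a c; exact: (conj a c).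
  exact: filter_ex E.
have [m hmk] := choice hm.
pose z k := X k (m k).
have Tz : forall k, T (z k) by move=> k; exact: ((hX k).1.1 (m k)).
exists z; split.
- split => // y Ty.
  apply/cvgrPdist_lt => eps eps0.
  pose e' := eps / 4.
  have e'0 : 0 < e' by rewrite divr_gt0.
  have [r r0 hr] := near_F oc Ty e'0.
  have [j hj] := qseq_dense y r0.
  have [Tq Fyq Fqy] := hr _ hj.
  have [xs0 hxs0] := hhoro.1.
  have g1 := conv_lip oc hxs0 Ty Tq.
  have g2 := conv_lip oc hxs0 Tq Ty.
  have E3 : \forall k \near \oo, `|g (qseq R n j) - gs k (qseq R n j)| < e'.
    by move: (hg _ Tq) => /cvgrPdist_lt; apply.
  near=> k.
  have hk1 : (j <= k)%N by near: k; exact: nbhs_infty_ge.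
  have hk2 : ek k < e' by near: k; exact: ev_inv.
  have hk3 : `|g (qseq R n j) - gs k (qseq R n j)| < e' by near: k; exact: E3.
  have hk4 := (hmk k).2 j hk1 Tq.
  have p1 := F_tri oc Ty Tq (Tz k).
  have p2 := F_tri oc Tq Ty (Tz k).
  have e4 : eps = 4 * e' by rewrite /e' mulrC divfK // pnatr_eq0.
  rewrite e4.
  exact: (combine g1 g2 Fyq Fqy p1 p2 hk3 hk4 hk2).
- apply/cvgrPdist_lt => eps eps0.
  near=> k.
  have hk2 : ek k < eps by near: k; exact: ev_inv.
  exact: (lt_trans (hmk k).1 hk2).
Unshelve. all: by end_near.
Qed.
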